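(* Let $\mathcal{S}_{\textsf{EVSP}}$ denote an optimal solution for $\mathcal{I}_{\textsf{EVSP}} = f(\mathcal{I}_{\textsf{BPP}})$. If a solution $\mathcal{S}_{\textsf{BPP}}$ for $\mathcal{I}_{\textsf{BPP}}$ is constructed from $\mathcal{S}_{\textsf{EVSP}}$ by packing, for each vehicle used to serve item customers, all items associated with the item customers served by that vehicle into a single bin, and packing each item associated with an unserved item customer (if any) into its own bin, then $\mathcal{S}_{\textsf{BPP}}$ is an optimal solution for $\mathcal{I}_{\textsf{BPP}}$.
   Context: The electric vehicle sharing problem (EVSP): there is a set of stations, each with a capacity (number of parking spaces) and a number of charging facilities; a fleet of identical electric vehicles with battery capacity $\textsf{L}$ initially located at stations; and a set of customers, each with a set of driving demands $(s^{\text{out}}, t_i, s^{\text{in}}, t_j, \varepsilon)$ (pick-up station, departure time, drop-off station, arrival time, required energy). A demand is fulfilled by a vehicle if the vehicle is at the pick-up station at time $t_i$, its battery energy is at least $\varepsilon$, and there is a free parking space at the drop-off station; the vehicle's energy decreases by $\varepsilon$ and increases only by charging at a charging facility. A customer is served iff all its demands are fulfilled; the objective is to maximize the total rental time $\sum (t_j - t_i)$ over demands of served customers. The one-dimensional bin packing problem (BPP): given items $\mathcal{N} = \{1,\dots,n\}$ with sizes $\ell_i \in (0,1]$, find a partition $\{\mathcal{N}_1,\dots,\mathcal{N}_k\}$ of $\mathcal{N}$ such that the sizes in each part sum to at most $1$ and $k$ (the number of bins) is minimized. The reduction $f$ maps a BPP instance $\mathcal{I}_{\textsf{BPP}}$ to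 the EVSP instance $\mathcal{I}_{\textsf{EVSP}}$ with $2n$ customers, each having a single demand: there is a single station $s$ with capacity $n$ and no charging facilities; there are $n$ fully charged vehicles initially at $s$, each with battery capacity $\textsf{L} = 1$; for each item $i \in \mathcal{N}$ there is an item customer with the single demand $(s, 2i, s, 2i+1, \ell_i)$; and there are $n$ dummy customers, each with the single demand $(s, 1, s, 2, \textsf{L})$. Each customer contributes rental time $1$ to the objective, so maximizing total rental time is equivalent to maximizing the number of served customers. *)

(* Defs.v *)
From mathcomp Require Import all_boot all_order all_algebra.
Set Implicit Arguments. Unset Strict Implicit. Unset Printing Implicit Defensive.
Import Order.TTheory GRing.Theory Num.Theory.

(* A driving demand (s_out, t_i, s_in, t_j, eps). Times are natural numbers. *)
Record demand (S R : Type) := Demand {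
  d_out : S; d_dep : nat; d_in : S; d_arr : nat; d_eps : R }.

Record evsp (R : realFieldType) := EVSP {
  ev_station : finType;
  ev_cap : ev_station -> nat;                (* number of parking spaces *)
  ev_vehicle : finType;
  ev_L : R;                                  (* battery capacity *)
  ev_init_station : ev_vehicle -> ev_station;
  ev_init_energy : ev_vehicle -> R;
  ev_customer : finType;
  ev_demands : ev_customer -> seq (demand ev_station R) }.

Section EVSP.
Variables (R : realFieldType) (I : evsp R).

Definition slot := {c : ev_customer I & 'I_(size (ev_demands c))}.
Definition slot_of (c : ev_customer I) (k : 'I_(size (ev_demands c))) : slot :=
  @existT _ (fun c => 'I_(size (ev_demands c))) c k.
Definition dem (x : slot) : demand (ev_station I) R :=
  tnth (in_tuple (ev_demands (tag x))) (tagged x).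

(* A solution assigns to each demand the vehicle fulfilling it (if any). *)
Definition evsp_sol := slot -> option (ev_vehicle I).

Variable sol : evsp_sol.

Definition assigned (v : ev_vehicle I) (x : slot) : bool := sol x == Some v.

Definition driving (v : ev_vehicle I) (t : nat) : bool :=
  [exists x, assigned v x && (d_dep (dem x) <= t < d_arr (dem x))].

Definition position (v : ev_vehicle I) (t : nat) : ev_station I :=
  if [pick x | assigned v x && (d_arr (dem x) <= t) &&
        [forall y, assigned v y && (d_arr (dem y) <= t) ==> (d_arr (dem y) <= d_arr (dem x))]]
  is Some x then d_in (dem x) else ev_init_station v.

Definition located (v : ev_vehicle I) (t : nat) (s : ev_station I) : bool :=
  ~~ driving v t && (position v t == s).

(* battery energy of v at time t (no charging facilities) *)
Definition energy (v : ev_vehicle I) (t : nat) : R :=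
  (ev_init_energy v - \sum_(x | assigned v x && (d_arr (dem x) <= t)%N) d_eps (dem x))%R.

Definition vehicle_feasible (v : ev_vehicle I) : Prop :=
  (forall x y, assigned v x -> assigned v y -> x != y ->
     (d_arr (dem x) <= d_dep (dem y)) || (d_arr (dem y) <= d_dep (dem x))) /\
  (forall x, assigned v x ->
     [/\ position v (d_dep (dem x)) = d_out (dem x),
         (d_eps (dem x) <= energy v (d_dep (dem x)))%R &
         #|[set v' | (v' != v) && located v' (d_arr (dem x)) (d_in (dem x))]|
           < ev_cap (d_in (dem x))]).

Definition evsp_feasible : Prop := forall v, vehicle_feasible v.

Definition served (c : ev_customer I) : bool :=
  [forall k : 'I_(size (ev_demands c)), sol (slot_of k) != None].

Definition rental_time : nat :=
  \sum_(c | served c) \sum_(k < size (ev_demands c))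
      (d_arr (dem (slot_of k)) - d_dep (dem (slot_of k))).

End EVSP.

Definition evsp_optimal (R : realFieldType) (I : evsp R) (sol : evsp_sol I) : Prop :=
  evsp_feasible sol /\
  forall sol' : evsp_sol I, evsp_feasible sol' -> rental_time sol' <= rental_time sol.

(* a solution is a partition {N_1,...,N_k} of the items; k = #|P| bins *)
Definition bpp_feasible (R : realFieldType) (n : nat) (l : 'I_n -> R)
    (P : {set {set 'I_n}}) : Prop :=
  partition P [set: 'I_n] /\ forall B, B \in P -> (\sum_(i in B) l i <= 1)%R.

Definition bpp_optimal (R : realFieldType) (n : nat) (l : 'I_n -> R)
    (P : {set {set 'I_n}}) : Prop :=
  bpp_feasible l P /\ forall Q, bpp_feasible l Q -> #|P| <= #|Q|.

(* The reduction f.  Items are 'I_n, item i (0-based) is item i+1 of the    *)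
(* paper; customers are inl i (item customers) and inr j (dummy customers). *)

Definition red_demand (R : realFieldType) (n : nat) (l : 'I_n -> R)
    (c : 'I_n + 'I_n) : demand unit R :=
  match c with
  | inl i => Demand tt (2 * i.+1) tt (2 * i.+1).+1 (l i)
  | inr _ => Demand tt 1 tt 2 1%R   (* energy L = 1 *)
  end.

Definition reduction (R : realFieldType) (n : nat) (l : 'I_n -> R) : evsp R :=
  @EVSP R unit (fun _ => n) 'I_n 1%R (fun _ => tt) (fun _ => 1%R)
        ('I_n + 'I_n)%type (fun c => [:: red_demand l c]).

Definition items_of (R : realFieldType) (n : nat) (l : 'I_n -> R)
    (sol : evsp_sol (reduction l)) (v : 'I_n) : {set 'I_n} :=
  [set i : 'I_n | served sol (inl i : ev_customer (reduction l))
                  && (sol (@slot_of _ (reduction l) (inl i) ord0) == Some v)].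

Definition bpp_of_evsp (R : realFieldType) (n : nat) (l : 'I_n -> R)
    (sol : evsp_sol (reduction l)) : {set {set 'I_n}} :=
  [set items_of sol v | v in [set v : 'I_n | items_of sol v != set0]]
  :|: [set [set i] | i in [set i : 'I_n | ~~ served sol (inl i : ev_customer (reduction l))]].

(* Main.v *)
Require Import Defs.
From mathcomp Require Import all_boot all_order all_algebra.
Import Order.TTheory GRing.Theory Num.Theory.
From mathcomp Require Import zify ring lra.
Set Implicit Arguments. Unset Strict Implicit.
Local Open Scope ring_scope.


Definition sl (R : realFieldType) n (l : 'I_n -> R) (c : 'I_n + 'I_n) : slot (reduction l) :=
  @slot_of _ (reduction l) c ord0.

Lemma demE (R : realFieldType) n (l : 'I_n -> R) (c : 'I_n + 'I_n) :
  dem (sl l c) = red_demand l c.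
Proof. by []. Qed.

Lemma slotE (R : realFieldType) n (l : 'I_n -> R) (x : slot (reduction l)) :
  x = sl l (tag x).
Proof. case: x => c k /=. rewrite /sl /slot_of. congr existT. by apply/val_inj; case: k => -[]. Qed.

Lemma servedE (R : realFieldType) n (l : 'I_n -> R) sol c :
  @served _ (reduction l) sol c = (sol (sl l c) != None).
Proof. apply/forallP/idP => [H|H k]; first exact: H.
  by have -> : k = ord0 by apply/val_inj; case: k => -[]. Qed.

Lemma sum_slot (R : realFieldType) n (l : 'I_n -> R) (P : pred (slot (reduction l))) :
  \sum_(x | P x) d_eps (dem x) =
  \sum_(i | P (sl l (inl i))) l i + \sum_(j | P (sl l (inr j))) 1.
Proof.
rewrite (reindex (sl l)) /=; last first.
  by apply: onW_bij; exists (@tag _ _) => [c|x] //; rewrite -slotE.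
by rewrite big_sumType.
Qed.

Lemma eps_ge0 (R : realFieldType) n (l : 'I_n -> R) (hl : forall i, (0 < l i <= 1)%R)
  (x : slot (reduction l)) : 0 <= d_eps (dem x).
Proof. rewrite (slotE x) demE; case: (tag x) => [i|j] /=; last exact: ler01.
by case/andP: (hl i) => /ltW. Qed.

Lemma cap_ok (R : realFieldType) n (l : 'I_n -> R) sol (v : 'I_n) (x : slot (reduction l)) :
  (#|[set v' | (v' != v) && @located _ (reduction l) sol v' (d_arr (dem x)) (d_in (dem x))]|
           < ev_cap (d_in (dem x)))%N.
Proof.
rewrite /=. apply: (@leq_ltn_trans #|[set~ v]|).
  by apply: subset_leq_card; apply/subsetP => w; rewrite !inE => /andP[].
rewrite cardsC1 card_ord. by case: v => v; case: (n).

Qed.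

Lemma energy_item (R : realFieldType) n (l : 'I_n -> R) (sol : evsp_sol (reduction l)) v i :
  evsp_feasible sol -> sol (sl l (inl i)) = Some v ->
  l i + \sum_(k | (sol (sl l (inl k)) == Some v) && ((2 * k.+1).+1 <= 2 * i.+1)%N) l k
      + \sum_(j | sol (sl l (inr j)) == Some v) 1 <= 1.
Proof.
move=> /(_ v) [_ H] hs.
have [_ + _] := H (sl l (inl i)) (introT eqP hs).
rewrite /energy sum_slot /=.
have -> : \sum_(j | assigned sol v (sl l (inr j)) && (2 <= 2 * i.+1)%N) (1 : R)
   = \sum_(j | sol (sl l (inr j)) == Some v) 1.
  by apply: eq_bigl => j; rewrite /assigned; case: eqP => //=; lia.
rewrite /assigned. lra.
Qed.

Lemma dummy_noitem (R : realFieldType) n (l : 'I_n -> R) (hl : forall i, (0 < l i <= 1)%R)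
  (sol : evsp_sol (reduction l)) v i j :
  evsp_feasible sol -> sol (sl l (inl i)) = Some v -> sol (sl l (inr j)) = Some v -> False.
Proof.
move=> F hi hj; have := energy_item F hi.
rewrite [\sum_(j0 | sol (sl l (inr j0)) == Some v) _](bigD1 j) ?hj //=.
have h1 : 0 <= \sum_(k | (sol (sl l (inl k)) == Some v) && ((2 * k.+1).+1 <= 2 * i.+1)%N) l k.
  by apply: sumr_ge0 => k _; case/andP: (hl k) => /ltW.
have h2 : 0 <= \sum_(j0 | (sol (sl l (inr j0)) == Some v) && (j0 != j)) (1 : R).
  by apply: sumr_ge0 => k _; exact: ler01.
have := hl i; case/andP => h3 _. lra.
Qed.

Lemma dummy_inj (R : realFieldType) n (l : 'I_n -> R)
  (sol : evsp_sol (reduction l)) v j j' :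
  evsp_feasible sol -> sol (sl l (inr j)) = Some v -> sol (sl l (inr j')) = Some v -> j = j'.
Proof.
move=> /(_ v) [H _] h h'; apply/eqP; apply/negPn/negP => ne.
have := H (sl l (inr j)) (sl l (inr j')).
have nxy : sl l (inr j) != sl l (inr j').
  apply: contra ne => /eqP e; have := congr1 (@tag _ _) e; by case=> ->.
by rewrite /assigned h h' eqxx => /(_ isT isT nxy).
Qed.

Lemma sum_sub (R : realFieldType) (T : finType) (P Q : pred T) (F : T -> R) :
  (forall i, P i -> Q i) -> (forall i, 0 <= F i) ->
  \sum_(i | P i) F i <= \sum_(i | Q i) F i.
Proof.
move=> PQ F0; rewrite [X in _ <= X](bigID P) /=.
have -> : \sum_(i | Q i && P i) F i = \sum_(i | P i) F i.
  by apply: eq_bigl => i; case E: (P i); rewrite ?andbT ?andbF // PQ.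
by rewrite lerDl sumr_ge0.
Qed.

Lemma items_ofE (R : realFieldType) n (l : 'I_n -> R) (sol : evsp_sol (reduction l)) v i :
  (i \in items_of sol v) = (sol (sl l (inl i)) == Some v).
Proof. by rewrite inE servedE; case: eqP => // ->. Qed.

Lemma bin_ok (R : realFieldType) n (l : 'I_n -> R) (hl : forall i, (0 < l i <= 1)%R)
  (sol : evsp_sol (reduction l)) v :
  evsp_feasible sol -> items_of sol v != set0 -> \sum_(i in items_of sol v) l i <= 1.
Proof.
move=> F /set0Pn [i0 i0in].
case: (arg_maxnP (fun i : 'I_n => (i : nat)) i0in) => i iin imax.
have := energy_item F (eqP (etrans (esym (items_ofE _ _ _)) iin)).
move=> HH; rewrite (bigD1 i) //=.
have h1 : \sum_(k in items_of sol v | k != i) l k <=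
   \sum_(k | (sol (sl l (inl k)) == Some v) && ((2 * k.+1).+1 <= 2 * i.+1)%N) l k.
  apply: sum_sub => [k /andP[kin kne]|k]; last by case/andP: (hl k) => /ltW.
  rewrite -items_ofE kin /=. have := imax k kin. 
  have : (k : nat) != i by []. lia.
have h2 : 0 <= \sum_(j0 | (sol (sl l (inr j0)) == Some v)) (1 : R).
  by apply: sumr_ge0 => k _; exact: ler01.
lra.
Qed.

Lemma rentalE (R : realFieldType) n (l : 'I_n -> R) (sol : evsp_sol (reduction l)) :
  rental_time sol = (#|[set i | sol (sl l (inl i)) != None]| + #|[set j | sol (sl l (inr j)) != None]|)%N.
Proof.
rewrite /rental_time big_sumType /=.
congr addn; rewrite -sum1_card; apply: eq_big => c; rewrite ?inE ?servedE //;
  move=> _; rewrite big_ord1 demE /=; lia.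
Qed.

Lemma upper (R : realFieldType) n (l : 'I_n -> R) (hl : forall i, (0 < l i <= 1)%R)
  (sol : evsp_sol (reduction l)) : evsp_feasible sol ->
  (rental_time sol + #|[set v | items_of sol v != set0]|
     + #|[set i | ~~ served sol (inl i : ev_customer (reduction l))]| <= 2 * n)%N.
Proof.
move=> F; rewrite rentalE.
set S := [set i | _]; set D := [set j | _]; set K := [set v | _]; set U := [set i | _].
have US : U = ~: S by apply/setP => i; rewrite !inE servedE.
have cS : (#|S| + #|U| = n)%N by rewrite US cardsC card_ord.
pose f j := odflt j (sol (sl l (inr j))).
have cD : #|D| = #|f @: D|.
  apply/esym/card_in_imset => j j'; rewrite !inE /f.
  case Ej: (sol _) => [v|] //; case Ej': (sol _) => [v'|] //= _ _ e.
  by subst v'; exact: dummy_inj F Ej Ej'.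
have sub : f @: D \subset ~: K.
  apply/subsetP => w /imsetP [j]; rewrite !inE /f; case Ej: (sol _) => [v|] //= _ ->.
  apply/negP => /set0Pn [i]; rewrite items_ofE => /eqP Ei.
  have := @dummy_noitem R n l hl sol v i j F Ei. exact.
have cK := cardsC K; rewrite card_ord in cK.
have := subset_leq_card sub. lia.
Qed.

Lemma card_ge n m : #|[set j : 'I_n | (m <= j)%N]| = (n - m)%N.
Proof.
rewrite -sum1_card big_mkcond /=.
have -> : \sum_(i < n) (if i \in [set j : 'I_n | (m <= j)%N] then 1 else 0) =
          \sum_(i < n) ((m <= i)%N : nat) by apply: eq_bigr => i _; rewrite inE; case: leqP.
elim: n => [|n IH]; first by rewrite big_ord0.
rewrite big_ord_recr /= IH; case: leqP => /=; lia.
Qed.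

Definition vQ n (Q : {set {set 'I_n}}) (i : 'I_n) : 'I_n :=
  insubd i (index (pblock Q i) (enum Q)).

Definition solQ (R : realFieldType) n (l : 'I_n -> R) (Q : {set {set 'I_n}}) :
  evsp_sol (reduction l) := fun x =>
  match tag x with
  | inl i => Some (vQ Q i)
  | inr j => if (#|Q| <= j)%N then Some j else None
  end.

Lemma cardQ n (Q : {set {set 'I_n}}) : partition Q [set: 'I_n] -> (#|Q| <= n)%N.
Proof.
move=> /and3P [/eqP cov tI n0].
have sub : Q \subset [set pblock Q i | i in [set: 'I_n]].
  apply/subsetP => B BQ; have /set0Pn [x xB] : B != set0 by apply: contraNneq n0 => <-.
  by apply/imsetP; exists x; rewrite ?inE // (def_pblock tI BQ xB).
apply: leq_trans (subset_leq_card sub) _.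
by apply: leq_trans (leq_imset_card _ _) _; rewrite cardsT card_ord.
Qed.

Lemma vQ_lt n (Q : {set {set 'I_n}}) i : partition Q [set: 'I_n] ->
  (val (vQ Q i) = index (pblock Q i) (enum Q)) /\ (index (pblock Q i) (enum Q) < #|Q|)%N.
Proof.
move=> P; move/and3P: (P) => [/eqP cov _ _].
have pin : pblock Q i \in Q by apply: pblock_mem; rewrite cov inE.
have lt : (index (pblock Q i) (enum Q) < #|Q|)%N by rewrite cardE index_mem mem_enum.
split => //; rewrite /vQ val_insubd ifT //.
apply: leq_trans lt _; exact: cardQ.
Qed.

Lemma vQ_inj n (Q : {set {set 'I_n}}) i k : partition Q [set: 'I_n] ->
  vQ Q i = vQ Q k -> k \in pblock Q i.
Proof.
move=> P e; have [e1 _] := vQ_lt i P; have [e2 _] := vQ_lt k P.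
move/and3P: (P) => [/eqP cov _ _].
have pin j : pblock Q j \in Q by apply: pblock_mem; rewrite cov inE.
have : pblock Q i = pblock Q k.
  apply: (@index_inj _ set0 (enum Q)); rewrite ?mem_enum ?pin //.
  by rewrite -e1 -e2 e.
by move=> ->; rewrite mem_pblock cov inE.
Qed.

Lemma solQ_rental (R : realFieldType) n (l : 'I_n -> R) (Q : {set {set 'I_n}}) :
  partition Q [set: 'I_n] -> (2 * n <= rental_time (@solQ R n l Q) + #|Q|)%N.
Proof.
move=> P; rewrite rentalE.
have -> : [set i | @solQ R n l Q (sl l (inl i)) != None] = [set: 'I_n] by apply/setP => i; rewrite !inE.
have -> : [set j | @solQ R n l Q (sl l (inr j)) != None] = [set j : 'I_n | (#|Q| <= j)%N].
  by apply/setP => j; rewrite !inE /solQ /=; case: leqP.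
rewrite cardsT card_ord card_ge; have := cardQ P; lia.
Qed.

Lemma solQ_feasible (R : realFieldType) n (l : 'I_n -> R) (hl : forall i, (0 < l i <= 1)%R)
  (Q : {set {set 'I_n}}) : bpp_feasible l Q -> evsp_feasible (@solQ R n l Q).
Proof.
move=> [P Hs] v; split.
  move=> x y; rewrite (slotE x) (slotE y) /assigned.
  case: (tag x) => [i|j]; case: (tag y) => [k|j'] /=; rewrite ?demE /=.
  - move=> _ _ ne; have : (i : nat) != k by apply: contra ne => /eqP/val_inj ->.
    lia.
  - move=> *; lia.
  - move=> *; lia.
  - rewrite /solQ /=; case: (leqP #|Q| j) => // _ /eqP [->]; case: (leqP #|Q| j') => // _ /eqP [->]; by rewrite eqxx.
move=> x H; split; first by case: (position _ _ _); case: (d_out _).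
  2: exact: cap_ok.
rewrite /energy /= sum_slot; move: H; rewrite (slotE x) /assigned /solQ /= demE.
move/and3P: (P) => [/eqP cov _ _].
have pin j : pblock Q j \in Q by apply: pblock_mem; rewrite cov inE.
case: (tag x) => [i|j] /=.
  move=> /eqP [<-].
  rewrite [X in _ <= _ - (_ + X)]big_pred0; last first.
    move=> j /=; case: (leqP #|Q| j) => //= le; apply/negP => /andP[/eqP [e] _].
    by have [e1 lt] := vQ_lt i P; move: le; rewrite e e1 leqNgt lt.
  have h1 : \sum_(k < n | (Some (vQ Q k) == Some (vQ Q i)) && (2 * k.+1 < 2 * i.+1)%N) l k
         <= \sum_(k in pblock Q i | k != i) l k.
    apply: sum_sub => [k /andP[/eqP [e2] hlt]|k]; last by case/andP: (hl k) => /ltW.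
    rewrite (vQ_inj P (esym e2)) /=; apply/negP => /eqP ki; rewrite ki in hlt; lia.
  have := Hs _ (pin i); rewrite (bigD1 i) /=; last by rewrite mem_pblock cov inE.
  lra.
case: (leqP #|Q| j) => // _ /eqP [<-].
rewrite !big_pred0 //=; first by rewrite addr0 subr0.
  by move=> k; rewrite andbF.
by move=> k; apply/negP => /andP[_]; lia.
Qed.

Definition blk (R : realFieldType) n (l : 'I_n -> R) (sol : evsp_sol (reduction l)) (x : 'I_n) :=
  match sol (sl l (inl x)) with Some v => items_of sol v | None => [set x] end.

Lemma blk_in (R : realFieldType) n (l : 'I_n -> R) (sol : evsp_sol (reduction l)) x :
  (blk sol x \in bpp_of_evsp sol) && (x \in blk sol x).
Proof.
rewrite /blk /bpp_of_evsp; case E: (sol _) => [v|].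
  have xin : x \in items_of sol v by rewrite items_ofE E.
  rewrite xin andbT; apply/setUP; left; apply/imsetP; exists v => //.
  by rewrite inE; apply/set0Pn; exists x.
rewrite set11 andbT; apply/setUP; right; apply/imsetP; exists x => //.
by rewrite inE servedE E.
Qed.

Lemma blk_eq (R : realFieldType) n (l : 'I_n -> R) (sol : evsp_sol (reduction l)) A x :
  A \in bpp_of_evsp sol -> x \in A -> A = blk sol x.
Proof.
rewrite /blk; case/setUP => /imsetP [w]; rewrite inE => win ->.
  by rewrite items_ofE => /eqP ->.
by rewrite inE => /eqP ->; move: win; rewrite servedE; case: (sol _).
Qed.

Theorem proposition7 (R : realFieldType) (n : nat) (l : 'I_n -> R)
  (hl : forall i, (0 < l i <= 1)%R)
  (sol : evsp_sol (reduction l)) :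
  evsp_optimal sol -> bpp_optimal l (bpp_of_evsp sol).
Proof.
move=> [F opt]; split.
  split.
    apply/and3P; split.
    - apply/eqP/setP => x; rewrite inE; apply/bigcupP.
      by have /andP[h1 h2] := blk_in sol x; exists (blk sol x).
    - apply/trivIsetP => A B AP BP AB; rewrite disjoint_subset; apply/subsetP => x xA; rewrite inE; apply/negP => xB.
      by move/negP: AB; apply; rewrite (blk_eq AP xA) (blk_eq BP xB).
    - apply/negP => /setUP [] /imsetP [w].
        by rewrite inE => /negP nz e; apply: nz; rewrite -e.
      by move=> _ e; have := set11 w; rewrite -e inE.
  move=> B /setUP [] /imsetP [w]; rewrite inE => win ->.
    exact: bin_ok.
  by rewrite big_set1; case/andP: (hl w).
move=> Q [QP Qs].
have h1 := upper hl F.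
have h2 := @solQ_rental R n l Q QP.
have h3 := opt _ (@solQ_feasible R n l hl Q (conj QP Qs)).
rewrite /bpp_of_evsp.
set K := [set v | items_of sol v != set0]; set U := [set i | _].
set A := [set items_of sol v | v in K]; set B := [set [set i] | i in U].
have cA : (#|A| <= #|K|)%N by exact: leq_imset_card.
have cB : (#|B| <= #|U|)%N by exact: leq_imset_card.
have := cardsUI A B.
have h1' : (rental_time sol + #|K| + #|U| <= 2 * n)%N := h1.
have s2 : (#|K| + #|U| <= #|Q|)%N by move: h1' h2 h3; clear; lia.
move=> e; have s1 : (#|A :|: B| <= #|K| + #|U|)%N.
  apply: leq_trans (leq_addr #|A :&: B| _) _; rewrite e; exact: leq_add cA cB.
exact: leq_trans s1 s2.
Qed.
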